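(* Let $\pi$ be uniformly distributed on $\mathrm{PF}_n$ and let $X$ be a Borel random variable, $P(X=m)=e^{-m}m^{m-1}/m!$ for $m=1,2,\dots$. For each fixed integer $j\ge 0$, $$P(\pi_1=n-j)\sim\frac{P(X\le j+1)}{n}\qquad(n\to\infty).$$ In particular $P(\pi_1=n)\sim 1/(en)$.
   Context: A parking function of length $n$ is a sequence $(\pi_1,\dots,\pi_n)$ with $1\le\pi_i\le n$ such that $\#\{t:\pi_t\le i\}\ge i$ for all $1\le i\le n$; $\mathrm{PF}_n$ denotes the set of these. $a_n\sim b_n$ means $a_n/b_n\to1$. *)

(* Defs.v *)
From Stdlib Require Import Reals Arith List Bool.
Import ListNotations.
Open Scope bool_scope.

Fixpoint all_seqs (n k : nat) : list (list nat) :=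
  match k with
  | O => [ [] ]
  | S k' => flat_map (fun x => map (fun s => x :: s) (all_seqs n k')) (seq 1 n)
  end.

Definition count_le (p : list nat) (i : nat) : nat :=
  length (filter (fun x => Nat.leb x i) p).

Definition is_pf (n : nat) (p : list nat) : Prop :=
  length p = n /\ (forall x, In x p -> (1 <= x <= n)%nat) /\
  (forall i, (1 <= i <= n)%nat -> (i <= count_le p i)%nat).

Definition is_pfb (n : nat) (p : list nat) : bool :=
  Nat.eqb (length p) n &&
  forallb (fun x => Nat.leb 1 x && Nat.leb x n) p &&
  forallb (fun i => Nat.leb i (count_le p i)) (seq 1 n).

(* PF_n as an explicit list (no duplicates, since all_seqs has none). *)
Definition PF (n : nat) : list (list nat) := filter (is_pfb n) (all_seqs n n).

Open Scope R_scope.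
Definition prob_first (n v : nat) : R :=
  INR (length (filter (fun p => Nat.eqb (hd 0%nat p) v) (PF n))) / INR (length (PF n)).

Definition borel_pmf (m : nat) : R :=
  exp (- INR m) * INR m ^ (m - 1) / INR (fact m).

Definition borel_cdf (k : nat) : R :=
  fold_right Rplus 0 (map borel_pmf (seq 1 k)).
Open Scope R_scope.

(* Main.v *)
Require Import Defs.
From Stdlib Require Import Reals Arith List Lia Bool Lra.
From mathcomp Require binomial.
Set Bullet Behavior "Strict Subproofs".
Import ListNotations.

Open Scope nat_scope.

Fixpoint seqs (A : list nat) (k : nat) : list (list nat) :=
  match k with
  | O => [ [] ]
  | S k' => flat_map (fun x => map (fun s => x :: s) (seqs A k')) A
  end.

Lemma all_seqs_eq n k : all_seqs n k = seqs (seq 1 n) k.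
Proof. induction k; simpl; [reflexivity| now rewrite IHk]. Qed.

Definition cnt (P : list nat -> bool) (L : list (list nat)) : nat := length (filter P L).

Fixpoint lsum {A} (f : A -> nat) (l : list A) : nat :=
  match l with [] => 0 | x :: l' => f x + lsum f l' end.

Lemma lsum_app {A} (f : A -> nat) l1 l2 : lsum f (l1 ++ l2) = lsum f l1 + lsum f l2.
Proof. induction l1; simpl; lia. Qed.

Lemma lsum_ext_in {A} (f g : A -> nat) l : (forall x, In x l -> f x = g x) -> lsum f l = lsum g l.
Proof. induction l; simpl; intros H; [reflexivity|]. rewrite H by auto. f_equal. apply IHl; auto. Qed.

Lemma lsum_plus {A} (f g : A -> nat) l : lsum (fun x => f x + g x) l = lsum f l + lsum g l.
Proof. induction l; simpl; lia. Qed.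

Lemma lsum_map {A B} (f : B -> nat) (g : A -> B) l : lsum f (map g l) = lsum (fun x => f (g x)) l.
Proof. induction l; simpl; auto. Qed.

Lemma lsum_flat_map {A B} (f : B -> nat) (g : A -> list B) l :
  lsum f (flat_map g l) = lsum (fun x => lsum f (g x)) l.
Proof. induction l; simpl; auto. rewrite lsum_app; lia. Qed.

Lemma lsum_swap {A B} (f : A -> B -> nat) la lb :
  lsum (fun x => lsum (fun y => f x y) lb) la = lsum (fun y => lsum (fun x => f x y) la) lb.
Proof.
  induction la; simpl.
  - induction lb; simpl; auto.
  - rewrite IHla. rewrite <- lsum_plus. reflexivity.
Qed.

Lemma lsum_split {A} (f : A -> nat) (sm : A -> bool) l :
  lsum f l = lsum f (filter sm l) + lsum f (filter (fun x => negb (sm x)) l).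
Proof. induction l; simpl; auto. destruct (sm a); simpl; lia. Qed.

Lemma cnt_ext_in P Q L : (forall x, In x L -> P x = Q x) -> cnt P L = cnt Q L.
Proof. intros H; unfold cnt; rewrite (filter_ext_in _ _ _ H); reflexivity. Qed.

Lemma cnt_map P g L : cnt P (map g L) = cnt (fun x => P (g x)) L.
Proof. unfold cnt; induction L; simpl; auto. destruct (P (g a)); simpl; auto. Qed.

Lemma cnt_app P L1 L2 : cnt P (L1 ++ L2) = cnt P L1 + cnt P L2.
Proof. unfold cnt. rewrite filter_app, length_app. reflexivity. Qed.

Lemma cnt_flat_map {A} P (g : A -> list (list nat)) l :
  cnt P (flat_map g l) = lsum (fun x => cnt P (g x)) l.
Proof. induction l; simpl; auto. rewrite cnt_app; lia. Qed.

Lemma cnt_seqs_S P A k : cnt P (seqs A (S k)) = lsum (fun x => cnt (fun s => P (x :: s)) (seqs A k)) A.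
Proof. simpl. rewrite cnt_flat_map. apply lsum_ext_in. intros; apply cnt_map. Qed.

Fixpoint shuf (k : nat) (f : nat -> nat -> nat) : nat :=
  match k with
  | O => f 0 0
  | S k' => shuf k' (fun c d => f (S c) d) + shuf k' (fun c d => f c (S d))
  end.

Lemma shuf_ext k f g : (forall c d, c + d = k -> f c d = g c d) -> shuf k f = shuf k g.
Proof.
  revert f g; induction k; intros f g H; simpl.
  - apply H; auto.
  - f_equal; apply IHk; intros; apply H; lia.
Qed.

Lemma shuf_lsum {A} k (f : A -> nat -> nat -> nat) l :
  shuf k (fun c d => lsum (fun x => f x c d) l) = lsum (fun x => shuf k (f x)) l.
Proof.
  revert f; induction k; intros f; simpl; auto.
  rewrite IHk, IHk, <- lsum_plus; reflexivity.
Qed.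

Definition PC (sm : nat -> bool) (A : list nat) (P : list nat -> list nat -> bool) c d :=
  lsum (fun u => cnt (P u) (seqs (filter (fun x => negb (sm x)) A) d)) (seqs (filter sm A) c).

Theorem shuffle sm A k : forall P,
  cnt (fun s => P (filter sm s) (filter (fun x => negb (sm x)) s)) (seqs A k) = shuf k (PC sm A P).
Proof.
  induction k; intros P.
  - simpl. unfold PC, cnt; simpl. destruct (P [] []); reflexivity.
  - rewrite cnt_seqs_S. rewrite (lsum_split _ sm A). simpl shuf.
    f_equal.
    + rewrite (lsum_ext_in _ (fun x => shuf k (PC sm A (fun u w => P (x :: u) w)))).
      2:{ intros x Hx. apply filter_In in Hx. destruct Hx as [_ Hx].
          rewrite <- IHk. apply cnt_ext_in. intros s _. simpl. rewrite Hx. reflexivity. }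
      rewrite <- shuf_lsum. apply shuf_ext. intros c d _.
      unfold PC. simpl. rewrite lsum_flat_map.
      apply lsum_ext_in. intros x _. rewrite lsum_map. reflexivity.
    + rewrite (lsum_ext_in _ (fun x => shuf k (PC sm A (fun u w => P u (x :: w))))).
      2:{ intros x Hx. apply filter_In in Hx. destruct Hx as [_ Hx].
          rewrite <- IHk. apply cnt_ext_in. intros s _. simpl.
          destruct (sm x); [discriminate|]. reflexivity. }
      rewrite <- shuf_lsum. apply shuf_ext. intros c d _.
      unfold PC. rewrite lsum_swap. apply lsum_ext_in. intros u _.
      rewrite cnt_seqs_S. reflexivity.
Qed.

Open Scope nat_scope.

Lemma in_seqs A k s : In s (seqs A k) -> length s = k /\ (forall x, In x s -> In x A).
Proof.
  revert s; induction k; simpl; intros s H.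
  - destruct H as [H|[]]; subst; simpl; split; auto; intros _ [].
  - apply in_flat_map in H. destruct H as [x [Hx H]]. apply in_map_iff in H.
    destruct H as [s' [<- Hs']]. apply IHk in Hs'. destruct Hs' as [L Hs'].
    simpl; split; [lia|]. intros y [<-|Hy]; auto.
Qed.

Lemma count_le_cons x s i : count_le (x :: s) i = (if x <=? i then 1 else 0) + count_le s i.
Proof. unfold count_le; simpl. destruct (x <=? i); reflexivity. Qed.

Lemma count_le_split sm s i :
  count_le s i = count_le (filter sm s) i + count_le (filter (fun x => negb (sm x)) s) i.
Proof.
  induction s; simpl; auto. rewrite count_le_cons.
  destruct (sm a); simpl; rewrite ?count_le_cons, IHs; lia.
Qed.

Lemma count_le_shift w s i : w <= i -> count_le (map (fun x => x + w) s) i = count_le s (i - w).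
Proof.
  intros H; induction s; simpl; auto. rewrite !count_le_cons, IHs.
  destruct (a + w <=? i) eqn:E1, (a <=? i - w) eqn:E2; auto;
  apply Nat.leb_le in E1 || apply Nat.leb_gt in E1;
  apply Nat.leb_le in E2 || apply Nat.leb_gt in E2; lia.
Qed.

Lemma count_le_all s i : (forall x, In x s -> x <= i) -> count_le s i = length s.
Proof.
  induction s; simpl; intros H; auto. rewrite count_le_cons, IHs by auto.
  rewrite (proj2 (Nat.leb_le _ _)) by auto. reflexivity.
Qed.

Lemma count_le_none s i : (forall x, In x s -> i < x) -> count_le s i = 0.
Proof.
  induction s; simpl; intros H; auto. rewrite count_le_cons, IHs by auto.
  rewrite (proj2 (Nat.leb_gt _ _)) by auto. reflexivity.
Qed.

Lemma count_le_le s i : count_le s i <= length s.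
Proof. unfold count_le. apply filter_length_le. Qed.

Lemma count_le_repeat x c j : count_le (repeat x c) j = if x <=? j then c else 0.
Proof. induction c; simpl. destruct (x <=? j); auto. rewrite count_le_cons, IHc. destruct (x <=? j); auto. Qed.

Lemma seqs_map f A k : seqs (map f A) k = map (map f) (seqs A k).
Proof.
  induction k; simpl; auto. rewrite IHk.
  rewrite flat_map_concat_map, map_map, flat_map_concat_map, concat_map, map_map.
  f_equal. apply map_ext. intros a. rewrite !map_map. reflexivity.
Qed.

Lemma seq_shift_add w s len : map (fun x => x + w) (seq s len) = seq (s + w) len.
Proof. revert s; induction len; intros s; simpl; auto. rewrite IHlen. reflexivity. Qed.

Lemma seqs_single x c : seqs [x] c = [repeat x c].
Proof. induction c; simpl; auto. rewrite IHc. reflexivity. Qed.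

Lemma filter_all_true {A} (f : A -> bool) l : (forall x, In x l -> f x = true) -> filter f l = l.
Proof. induction l; simpl; intros H; auto. rewrite H by auto. rewrite IHl; auto. Qed.
Lemma filter_all_false {A} (f : A -> bool) l : (forall x, In x l -> f x = false) -> filter f l = [].
Proof. induction l; simpl; intros H; auto. rewrite H by auto. rewrite IHl; auto. Qed.

Lemma filter_seq_le w n : w <= n ->
  filter (fun x => x <=? w) (seq 1 n) = seq 1 w /\
  filter (fun x => negb (x <=? w)) (seq 1 n) = seq (1 + w) (n - w).
Proof.
  intros H. replace n with (w + (n - w)) at 1 2 by lia. rewrite seq_app, !filter_app.
  rewrite (filter_all_true), (filter_all_false _ (seq 1 w)), (filter_all_false _ (seq _ (n-w))),
   (filter_all_true _ (seq _ (n-w))).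
  - rewrite app_nil_r; simpl; auto.
  - intros x Hx. apply in_seq in Hx. apply negb_true_iff, Nat.leb_gt. lia.
  - intros x Hx. apply in_seq in Hx. apply Nat.leb_gt. lia.
  - intros x Hx. apply in_seq in Hx. rewrite negb_false_iff. apply Nat.leb_le. lia.
  - intros x Hx. apply in_seq in Hx. apply Nat.leb_le. lia.
Qed.

Lemma forallb_seq f s len :
  forallb f (seq s len) = true <-> (forall i, s <= i < s + len -> f i = true).
Proof.
  rewrite forallb_forall. split; intros H i Hi; apply H. apply in_seq; lia. apply in_seq in Hi; lia.
Qed.

Lemma forallb_ext {A} (f g : A -> bool) l : (forall x, f x = g x) -> forallb f l = forallb g l.
Proof. intros H; induction l; simpl; auto. rewrite H, IHl; auto. Qed.

Definition Gcond (a k : nat) (p : list nat) : bool :=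
  forallb (fun i => i <=? count_le p (a + i - 1)) (seq 1 k).

Definition G (N a k : nat) : nat := cnt (Gcond a k) (seqs (seq 1 N) k).

Lemma G_zero_k N a : G N a 0 = 1.
Proof. reflexivity. Qed.

Lemma G_zero_a N k : 1 <= k -> G N 0 k = 0.
Proof.
  intros Hk. unfold G, cnt. rewrite (filter_all_false). reflexivity.
  intros s Hs. apply in_seqs in Hs. destruct Hs as [_ Hs].
  destruct (Gcond 0 k s) eqn:E; auto. unfold Gcond in E. rewrite forallb_seq in E.
  specialize (E 1 ltac:(lia)). apply Nat.leb_le in E. simpl in E.
  rewrite count_le_none in E. lia. intros x Hx. apply Hs, in_seq in Hx. lia.
Qed.

Lemma G_ones N a k : 1 <= a -> 1 <= N ->
  G N a k = shuf k (fun c d => G (N - 1) (a + c - 1) d).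
Proof.
  intros Ha HN. unfold G.
  set (sm := fun x => x <=? 1).
  set (P := fun u w => forallb (fun i => i <=? count_le u (a + i - 1) + count_le w (a + i - 1)) (seq 1 k)).
  rewrite (cnt_ext_in _ (fun s => P (filter sm s) (filter (fun x => negb (sm x)) s))).
  2:{ intros s _. unfold Gcond, P. apply forallb_ext. intros i. rewrite <- count_le_split. reflexivity. }
  rewrite shuffle. apply shuf_ext. intros c d Hcd.
  unfold PC. destruct (filter_seq_le 1 N HN) as [E1 E2]. unfold sm. rewrite E1, E2.
  change (seq 1 1) with [1]. change (1+1) with 2. rewrite seqs_single. simpl lsum. simpl lsum. rewrite Nat.add_0_r.
  replace (seq 2 (N - 1)) with (map (fun x => x + 1) (seq 1 (N - 1))) by (rewrite seq_shift_add; reflexivity).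
  rewrite seqs_map, cnt_map. apply cnt_ext_in. intros w _.
  unfold P, Gcond. apply eq_iff_eq_true. rewrite !forallb_seq.
  split; intros H i Hi.
  - specialize (H (c + i) ltac:(lia)). apply Nat.leb_le in H. apply Nat.leb_le.
    rewrite count_le_repeat, count_le_shift in H by lia.
    rewrite (proj2 (Nat.leb_le 1 _)) in H by lia.
    replace (a + c - 1 + i - 1) with (a + (c + i) - 1 - 1) by lia. lia.
  - apply Nat.leb_le. rewrite count_le_repeat, count_le_shift by lia.
    rewrite (proj2 (Nat.leb_le 1 _)) by lia.
    destruct (le_lt_dec i c) as [Hic|Hic]; [lia|].
    specialize (H (i - c) ltac:(lia)). apply Nat.leb_le in H.
    replace (a + c - 1 + (i - c) - 1) with (a + i - 1 - 1) in H by lia. lia.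
Qed.

Open Scope R_scope.

Fixpoint shufR (k : nat) (f : nat -> nat -> R) : R :=
  match k with
  | O => f 0%nat 0%nat
  | S k' => shufR k' (fun c d => f (S c) d) + shufR k' (fun c d => f c (S d))
  end.

Lemma INR_shuf k f : INR (shuf k f) = shufR k (fun c d => INR (f c d)).
Proof. revert f; induction k; intros f; simpl; auto. rewrite plus_INR, !IHk. reflexivity. Qed.

Lemma shufR_ext k f g : (forall c d, (c + d = k)%nat -> f c d = g c d) -> shufR k f = shufR k g.
Proof.
  revert f g; induction k; intros f g H; simpl.
  - apply H; auto.
  - f_equal; apply IHk; intros; apply H; lia.
Qed.

Lemma shufR_lin k f g (al be : R) :
  shufR k (fun c d => al * f c d + be * g c d) = al * shufR k f + be * shufR k g.
Proof.
  revert f g; induction k; intros f g; simpl; auto.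
  rewrite (IHk (fun c d => f (S c) d)), (IHk (fun c d => f c (S d))). ring.
Qed.

Lemma shufR_S k f : shufR (S k) f = shufR k (fun c d => f (S c) d) + shufR k (fun c d => f c (S d)).
Proof. reflexivity. Qed.

Lemma shufR_binom k x y : shufR k (fun c d => x ^ c * y ^ d) = (x + y) ^ k.
Proof.
  revert x y. induction k; intros x y; [simpl; ring|]. rewrite shufR_S.
  rewrite (shufR_ext k _ (fun c d => x * (x ^ c * y ^ d) + 0 * (x ^ c * y ^ d))) by (intros; simpl; ring).
  rewrite (shufR_ext k (fun c d => x ^ c * y ^ (S d)) (fun c d => y * (x ^ c * y ^ d) + 0 * (x ^ c * y ^ d))) by (intros; simpl; ring).
  rewrite !shufR_lin, IHk. cbn [pow]. ring.
Qed.

Lemma shufR_deriv k x y : shufR k (fun c d => INR d * x ^ c * y ^ (d - 1)) = INR k * (x + y) ^ (k - 1).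
Proof.
  revert x y. induction k; intros x y; [simpl; ring|]. rewrite shufR_S.
  rewrite (shufR_ext k _ (fun c d => x * (INR d * x ^ c * y ^ (d - 1)) + 0 * 0)) by (intros; simpl; ring).
  rewrite (shufR_ext k (fun c d => INR (S d) * x ^ c * y ^ (S d - 1))
       (fun c d => y * (INR d * x ^ c * y ^ (d - 1)) + 1 * (x ^ c * y ^ d))).
  2:{ intros c d _. rewrite S_INR. destruct d; simpl; [ring|]. rewrite Nat.sub_0_r. ring. }
  rewrite !shufR_lin, IHk, shufR_binom.
  destruct k; [simpl; ring|]. replace (S (S k) - 1)%nat with (S k) by lia. replace (S k - 1)%nat with k by lia.
  rewrite !(S_INR (S k)). cbn [pow]. ring.
Qed.

Definition Fr (a k : nat) : R := if (k =? 0)%nat then 1 else INR a * INR (a + k) ^ (k - 1).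

Lemma Fr_identity a k : shufR k (fun c d => Fr (a + c) d) = Fr (a + 1) k.
Proof.
  set (M := INR (a + k)).
  rewrite (shufR_ext k _ (fun c d => 1 * (1 ^ c * M ^ d) + (-1) * (INR d * 1 ^ c * M ^ (d - 1)))).
  2:{ intros c d Hcd. unfold Fr. rewrite !pow1. destruct d; [simpl; ring|].
      assert (E: (S d =? 0)%nat = false) by reflexivity. rewrite E.
      replace (S d - 1)%nat with d by lia. unfold M. replace (a + c + S d)%nat with (a + k)%nat by lia.
      replace (INR (a + k)) with (INR (a + c) + INR (S d)) by (rewrite <- plus_INR; f_equal; lia).
      cbn [pow]. rewrite S_INR. ring. }
  rewrite shufR_lin, shufR_binom, shufR_deriv. unfold Fr.
  destruct k; [simpl; ring|].
  assert (E: (S k =? 0)%nat = false) by reflexivity. rewrite E.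
  replace (S k - 1)%nat with k by lia.
  unfold M. replace (1 + INR (a + S k)) with (INR (a + 1) + INR (S k)) by (rewrite <- plus_INR, Rplus_comm, <- S_INR; f_equal; lia).
  replace (INR (a + 1 + S k)) with (INR (a + 1) + INR (S k)) by (rewrite <- plus_INR; f_equal; lia).
  cbn [pow]. rewrite S_INR. ring.
Qed.

Theorem G_formula k : forall N a, (1 <= a)%nat -> (a + k <= N + 1)%nat -> INR (G N a k) = Fr a k.
Proof.
  induction k as [k IH] using lt_wf_ind.
  destruct (Nat.eq_dec k 0) as [->|Hk].
  { intros. rewrite G_zero_k. reflexivity. }
  assert (Hin : forall b N, (b + 1 + k <= N + 1)%nat -> INR (G N (b + 1) k) = Fr (b + 1) k).
  { induction b; intros N Hb.
    - rewrite G_ones by lia. rewrite INR_shuf.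
      rewrite (shufR_ext k _ (fun c d => Fr (0 + c) d)).
      + apply Fr_identity.
      + intros c d Hcd. destruct c.
        * simpl. replace d with k by lia. rewrite G_zero_a by lia. unfold Fr.
          destruct (k =? 0)%nat eqn:E; [apply Nat.eqb_eq in E; lia|]. simpl. ring.
        * simpl. rewrite IH by lia. try (f_equal; lia).
    - rewrite G_ones by lia. rewrite INR_shuf.
      rewrite (shufR_ext k _ (fun c d => Fr (S b + c) d)).
      + rewrite Fr_identity. try (f_equal; lia).
      + intros c d Hcd. destruct c.
        * replace d with k by lia. replace (S b + 1 + 0 - 1)%nat with (b + 1)%nat by lia.
          rewrite IHb by lia. try (f_equal; lia).
        * rewrite IH by lia. try (f_equal; lia).
  }
  intros N a Ha HaN. replace a with (a - 1 + 1)%nat by lia. apply Hin. lia.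
Qed.

Open Scope nat_scope.

Lemma cnt_and_const b P L : cnt (fun s => P s && b) L = if b then cnt P L else 0.
Proof. destruct b; unfold cnt. - f_equal. apply filter_ext. intros; apply andb_true_r.
  - rewrite filter_all_false; auto. intros; apply andb_false_r. Qed.

Lemma cnt_const_and b P L : cnt (fun s => b && P s) L = if b then cnt P L else 0.
Proof. destruct b; reflexivity || (unfold cnt; rewrite filter_all_false; auto). Qed.

Lemma lsum_single v K s len : s <= v < s + len ->
  lsum (fun x => if x =? v then K else 0) (seq s len) = K.
Proof.
  revert s; induction len; intros s H; [lia|]. simpl.
  destruct (Nat.eq_dec s v) as [->|Hne].
  - rewrite Nat.eqb_refl. rewrite (lsum_ext_in _ (fun _ => 0)).
    + assert (forall m, lsum (fun _ : nat => 0) (seq m len) = 0) as Z. { clear. induction len; simpl; auto. }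
      rewrite Z. lia.
    + intros x Hx. apply in_seq in Hx. rewrite (proj2 (Nat.eqb_neq x v)) by lia. reflexivity.
  - rewrite (proj2 (Nat.eqb_neq s v)) by auto. simpl. apply IHlen. lia.
Qed.

Lemma lsum_cnt_if (b : list nat -> bool) (L : list (list nat)) K : lsum (fun u => if b u then K else 0) L = cnt b L * K.
Proof. unfold cnt; induction L; simpl; auto. destruct (b a); simpl; lia. Qed.

Lemma cnt_filter_filter f g L : length (filter f (filter g L)) = cnt (fun x => g x && f x) L.
Proof. unfold cnt; induction L; simpl; auto. destruct (g a) eqn:E1; simpl; [destruct (f a); simpl; rewrite ?IHL; auto|]. exact IHL. Qed.

Definition CbF (n v : nat) (cl : nat -> nat) : bool :=
  forallb (fun i => i <=? (if v <=? i then 1 else 0) + cl i) (seq 1 n).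
Definition Cb n v s := CbF n v (count_le s).
Definition Eb n v s := Cb n v s && (count_le s v =? v - 1).

Lemma CbF_ext n v cl cl' : (forall i, cl i = cl' i) -> CbF n v cl = CbF n v cl'.
Proof. intros H; unfold CbF. apply forallb_ext. intros i; rewrite H; auto. Qed.

Lemma PF_length n : length (PF n) = G n 1 n.
Proof.
  unfold PF, G. rewrite all_seqs_eq. apply cnt_ext_in. intros s Hs.
  apply in_seqs in Hs. destruct Hs as [L Hs].
  unfold is_pfb. rewrite L, Nat.eqb_refl.
  replace (forallb (fun x => (1 <=? x) && (x <=? n)) s) with true.
  - simpl andb. unfold Gcond. apply forallb_ext. intros i. replace (1 + i - 1) with i by lia. reflexivity.
  - symmetry. apply forallb_forall. intros x Hx. apply Hs, in_seq in Hx.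
    apply andb_true_iff; split; apply Nat.leb_le; lia.
Qed.

Lemma numer_eq n v : 1 <= v <= n ->
  length (filter (fun p => Nat.eqb (hd 0 p) v) (PF n)) = cnt (Cb n v) (seqs (seq 1 n) (n - 1)).
Proof.
  intros Hv. destruct n as [|n']; [lia|]. unfold PF.
  rewrite cnt_filter_filter. rewrite all_seqs_eq. rewrite cnt_seqs_S.
  rewrite (lsum_ext_in _ (fun x => if x =? v then cnt (Cb (S n') v) (seqs (seq 1 (S n')) n') else 0)).
  - replace (S n' - 1) with n' by lia. apply lsum_single. lia.
  - intros x Hx. simpl hd. rewrite cnt_and_const. destruct (x =? v) eqn:E; auto.
    apply Nat.eqb_eq in E; subst x.
    apply cnt_ext_in. intros s Hs. apply in_seqs in Hs. destruct Hs as [L Hs].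
    unfold is_pfb. simpl length. rewrite L, Nat.eqb_refl.
    replace (forallb (fun x => (1 <=? x) && (x <=? S n')) (v :: s)) with true.
    + rewrite !andb_true_l. unfold Cb, CbF. apply forallb_ext. intros i. rewrite count_le_cons. reflexivity.
    + symmetry. apply forallb_forall. intros x [<-|Hy].
      * apply andb_true_iff; split; apply Nat.leb_le; lia.
      * apply Hs, in_seq in Hy. apply andb_true_iff; split; apply Nat.leb_le; lia.
Qed.

Lemma cnt_split P Q R L : (forall x, P x = Q x || R x) -> (forall x, Q x && R x = false) ->
  cnt P L = cnt Q L + cnt R L.
Proof.
  intros H1 H2. unfold cnt; induction L; simpl; auto. rewrite H1. specialize (H2 a).
  destruct (Q a), (R a); simpl in *; try discriminate; lia.
Qed.

Lemma Cb_step n v L : 1 <= v <= n -> cnt (Cb n v) L = cnt (Cb n (S v)) L + cnt (Eb n v) L.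
Proof.
  intros Hv. apply cnt_split.
  - intros s. unfold Eb. apply eq_iff_eq_true. rewrite orb_true_iff, andb_true_iff, Nat.eqb_eq.
    unfold Cb, CbF. rewrite !forallb_seq. split.
    + intros H. destruct (Nat.eq_dec (count_le s v) (v - 1)) as [E|E]; [right; split; auto|left].
      intros i Hi. specialize (H i Hi). apply Nat.leb_le in H. apply Nat.leb_le.
      destruct (Nat.eq_dec i v) as [->|Hne].
      * rewrite Nat.leb_refl in H. lia.
      * revert H; destruct (Nat.leb_spec v i), (Nat.leb_spec (S v) i); intros HH; lia.
    + intros [H|[H _]]; auto. intros i Hi. specialize (H i Hi). apply Nat.leb_le in H. apply Nat.leb_le.
      revert H; destruct (Nat.leb_spec v i), (Nat.leb_spec (S v) i); intros HH; lia.
  - intros s. unfold Eb. destruct (Cb n (S v) s) eqn:E; auto. simpl.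
    destruct (Cb n v s); simpl; auto. apply Nat.eqb_neq. unfold Cb, CbF in E.
    rewrite forallb_seq in E. specialize (E v ltac:(lia)). apply Nat.leb_le in E.
    rewrite (proj2 (Nat.leb_gt (S v) v)) in E by lia. lia.
Qed.

Lemma Cb_top n : 1 <= n -> cnt (Cb n n) (seqs (seq 1 n) (n - 1)) = G n 1 (n - 1).
Proof.
  intros Hn. unfold G. apply cnt_ext_in. intros s Hs. apply in_seqs in Hs. destruct Hs as [L Hs].
  unfold Cb, CbF, Gcond. apply eq_iff_eq_true. rewrite !forallb_seq. split; intros H i Hi.
  - specialize (H i ltac:(lia)). apply Nat.leb_le in H. apply Nat.leb_le.
    rewrite (proj2 (Nat.leb_gt n i)) in H by lia. replace (1 + i - 1) with i by lia. lia.
  - apply Nat.leb_le. destruct (Nat.eq_dec i n) as [->|Hne].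
    + rewrite Nat.leb_refl. rewrite count_le_all; [lia|]. intros x Hx. apply Hs, in_seq in Hx. lia.
    + specialize (H i ltac:(lia)). apply Nat.leb_le in H. replace (1 + i - 1) with i in H by lia. lia.
Qed.

Lemma shuf_ind k c0 h : shuf k (fun c d => if c =? c0 then h d else 0) = binomial.binomial k c0 * h (k - c0).
Proof.
  revert c0 h; induction k; intros c0 h; simpl.
  - destruct c0; simpl; auto; lia.
  - destruct c0.
    + rewrite (shuf_ext k _ (fun c d => if c =? 0 then 0 else 0)) by (intros c d _; destruct (c =? 0); reflexivity).
      rewrite IHk, IHk, !binomial.bin0. simpl. rewrite Nat.sub_0_r. reflexivity.
    +
      rewrite IHk, IHk, binomial.binS.
      destruct (le_lt_dec (S c0) k).
      * replace (S (k - S c0)) with (k - c0) by lia. simpl. unfold ssrnat.addn, ssrnat.addn_rec. lia.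
      * rewrite (@binomial.bin_small k (S c0)). simpl. unfold ssrnat.addn, ssrnat.addn_rec. lia.
        apply (ssrbool.introT ssrnat.ltP). lia.
Qed.

Open Scope nat_scope.

Lemma Eb_point n w c d u z :
  1 <= w -> w < n -> c + d = n - 1 ->
  length u = c -> (forall x, In x u -> 1 <= x <= w) ->
  length z = d -> (forall x, In x z -> 1 <= x <= n - w) ->
  CbF n w (fun i => count_le u i + count_le (map (fun x => x + w) z) i)
    && (count_le u w + count_le (map (fun x => x + w) z) w =? w - 1)
  = (c =? w - 1) && Gcond 1 c u && Gcond 1 d z.
Proof.
  intros Hw Hwn Hcd Lu Hu Lz Hz.
  set (zz := map (fun x => x + w) z).
  assert (F1 : forall i, w <= i -> count_le u i = c).
  { intros i Hi. rewrite count_le_all; auto. intros x Hx. apply Hu in Hx. lia. }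
  assert (F2 : forall i, i <= w -> count_le zz i = 0).
  { intros i Hi. apply count_le_none. intros x Hx. unfold zz in Hx. apply in_map_iff in Hx.
    destruct Hx as [y [<- Hy]]. apply Hz in Hy. lia. }
  assert (F3 : forall i, w <= i -> count_le zz i = count_le z (i - w)).
  { intros i Hi. unfold zz. apply count_le_shift; auto. }
  apply eq_iff_eq_true. rewrite !andb_true_iff, !Nat.eqb_eq. unfold CbF, Gcond. rewrite !forallb_seq.
  split.
  - intros [HC HE]. rewrite F1, F2 in HE by lia.
    assert (Hc : c = w - 1) by lia. split; [split; auto|].
    + intros i Hi. specialize (HC i ltac:(lia)). apply Nat.leb_le in HC. apply Nat.leb_le.
      rewrite (proj2 (Nat.leb_gt w i)), F2 in HC by lia. replace (1 + i - 1) with i by lia. lia.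
    + intros t Ht. specialize (HC (w + t) ltac:(lia)). apply Nat.leb_le in HC. apply Nat.leb_le.
      rewrite (proj2 (Nat.leb_le w (w + t))), F1, F3 in HC by lia.
      replace (w + t - w) with t in HC by lia. replace (1 + t - 1) with t by lia. lia.
  - intros [[Hc G1] G2]. split.
    + intros i Hi. apply Nat.leb_le.
      destruct (lt_eq_lt_dec i w) as [[Hlt|Heq]|Hgt].
      * specialize (G1 i ltac:(lia)). apply Nat.leb_le in G1.
        rewrite (proj2 (Nat.leb_gt w i)), F2 by lia. replace (1 + i - 1) with i in G1 by lia. lia.
      * subst i. rewrite Nat.leb_refl, F1, F2 by lia. lia.
      * specialize (G2 (i - w) ltac:(lia)). apply Nat.leb_le in G2.
        rewrite (proj2 (Nat.leb_le w i)), F1, F3 by lia. replace (1 + (i - w) - 1) with (i - w) in G2 by lia. lia.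
    + rewrite F1, F2 by lia. lia.
Qed.

Lemma Eb_count n w : 1 <= w -> w < n ->
  cnt (Eb n w) (seqs (seq 1 n) (n - 1)) = binomial.binomial (n - 1) (w - 1) * (G w 1 (w - 1) * G (n - w) 1 (n - w)).
Proof.
  intros Hw Hwn.
  set (sm := fun x => x <=? w).
  set (P := fun u z => CbF n w (fun i => count_le u i + count_le z i) && (count_le u w + count_le z w =? w - 1)).
  rewrite (cnt_ext_in _ (fun s => P (filter sm s) (filter (fun x => negb (sm x)) s))).
  2:{ intros s _. unfold Eb, Cb, P. rewrite (count_le_split sm s w). f_equal.
      apply CbF_ext. intros i. apply count_le_split. }
  rewrite shuffle.
  rewrite (shuf_ext _ _ (fun c d => if c =? w - 1 then G w 1 (w - 1) * G (n - w) 1 d else 0)).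
  - rewrite shuf_ind. replace (n - 1 - (w - 1)) with (n - w) by lia. reflexivity.
  - intros c d Hcd. unfold PC. destruct (filter_seq_le w n ltac:(lia)) as [E1 E2].
    unfold sm. rewrite E1, E2.
    replace (seq (1 + w) (n - w)) with (map (fun x => x + w) (seq 1 (n - w))) by (rewrite seq_shift_add; f_equal; lia).
    rewrite seqs_map.
    rewrite (lsum_ext_in _ (fun u => if ((c =? w - 1) && Gcond 1 c u) then G (n - w) 1 d else 0)).
    + destruct (c =? w - 1) eqn:E.
      * apply Nat.eqb_eq in E. subst c. rewrite lsum_cnt_if. unfold G at 2. reflexivity.
      * simpl. clear. induction (seqs (seq 1 w) c); simpl; auto.
    + intros u Hu. apply in_seqs in Hu. destruct Hu as [Lu Hu].
      rewrite cnt_map. unfold G.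
      rewrite (cnt_ext_in _ (fun z => ((c =? w - 1) && Gcond 1 c u) && Gcond 1 d z)).
      * apply cnt_const_and.
      * intros z Hz. apply in_seqs in Hz. destruct Hz as [Lz Hz].
        unfold P. apply Eb_point; auto.
        -- intros x Hx. apply Hu, in_seq in Hx. lia.
        -- intros x Hx. apply Hz, in_seq in Hx. lia.
Qed.

From Coquelicot Require Import Coquelicot.
Open Scope R_scope.

Lemma lim_inv_n : is_lim_seq (fun n => / INR (n + 1)) 0.
Proof.
  replace (Finite 0) with (Rbar_inv p_infty) by reflexivity.
  apply is_lim_seq_inv; [|discriminate].
  apply (is_lim_seq_incr_n INR 1). apply is_lim_seq_INR.
Qed.

Lemma lim_pow (u : nat -> R) (l : R) k : is_lim_seq u l -> is_lim_seq (fun n => u n ^ k) (l ^ k).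
Proof.
  intros H; induction k; simpl.
  - apply is_lim_seq_const.
  - apply is_lim_seq_mult'; [exact H | exact IHk].
Qed.

Lemma lim_ratio_q q : is_lim_seq (fun n => INR (n - q) / INR (n + 1)) 1.
Proof.
  apply is_lim_seq_ext_loc with (u := fun n => 1 + (- INR (q + 1)) * / INR (n + 1)).
  - exists q. intros n Hn. rewrite minus_INR by lia. rewrite !plus_INR. simpl.
    field. pose proof (pos_INR n). lra.
  - replace (Finite 1) with (Finite (1 + - INR (q + 1) * 0)) by (f_equal; ring).
    apply is_lim_seq_plus'; [apply is_lim_seq_const|].
    apply (is_lim_seq_scal_l _ (- INR (q+1)) 0). apply lim_inv_n.
Qed.

Lemma lim_ffact m : forall q,
  is_lim_seq (fun n => INR (binomial.falling_factorial (n - q) m) / INR (n + 1) ^ m) 1.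
Proof.
  induction m; intros q.
  - apply is_lim_seq_ext with (u := fun _ => 1); [|apply is_lim_seq_const].
    intros n. rewrite binomial.ffactn0. simpl. field.
  - apply is_lim_seq_ext with
      (u := fun n => (INR (n - q) / INR (n + 1)) * (INR (binomial.falling_factorial (n - S q) m) / INR (n + 1) ^ m)).
    + intros n. rewrite binomial.ffactnS. unfold ssrnat.muln, ssrnat.muln_rec.
      replace (Init.Nat.pred (n - q)) with (n - S q)%nat by lia. rewrite mult_INR. simpl.
      field. split; [apply pow_nonzero|]; rewrite plus_INR; simpl; pose proof (pos_INR n); lra.
    + replace (Finite 1) with (Finite (1 * 1)) by (f_equal; ring). apply is_lim_seq_mult'; [apply lim_ratio_q|apply IHm].
Qed.

Lemma lim_exp_part m : (1 <= m)%nat ->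
  is_lim_seq (fun n => (1 - INR m / INR (n + 1)) ^ (n - m - 1)) (exp (- INR m)).
Proof.
  intros Hm.
  set (y := fun n => - INR m * / INR (n + 1)).
  assert (Hy : is_lim_seq y 0).
  { replace (Finite 0) with (Finite (- INR m * 0)) by (f_equal; ring).
    apply (is_lim_seq_scal_l _ (- INR m) 0). apply lim_inv_n. }
  assert (Hyne : forall n, y n <> 0).
  { intros n. unfold y. apply Rmult_integral_contrapositive. split.
    - apply Ropp_neq_0_compat. apply not_0_INR. lia.
    - apply Rinv_neq_0_compat. apply not_0_INR. lia. }
  assert (HL : is_lim_seq (fun n => ln (1 + y n) / y n) 1).
  { apply (is_lim_comp_seq (fun t => ln (1 + t) / t) y 0 1).
    - apply is_lim_div_ln1p_0.
    - exists O. intros n _. intros H. apply (Hyne n). injection H. auto.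
    - exact Hy. }
  assert (HA : is_lim_seq (fun n => exp (INR (n + 1) * ln (1 + y n))) (exp (- INR m))).
  { apply is_lim_seq_continuous. { apply derivable_continuous_pt, derivable_pt_exp. }
    apply is_lim_seq_ext_loc with (u := fun n => - INR m * (ln (1 + y n) / y n)).
    - exists O. intros n _. unfold y.
      assert (INR m <> 0) by (apply not_0_INR; lia). assert (INR (n+1) <> 0) by (apply not_0_INR; lia).
      field. repeat split; auto.
    - replace (Finite (- INR m)) with (Finite (- INR m * 1)) by (f_equal; ring).
      apply (is_lim_seq_scal_l _ (- INR m) 1). exact HL. }
  assert (HB : is_lim_seq (fun n => (1 + y n) ^ (m + 2)) 1).
  { replace (Finite 1) with (Finite ((1 + 0) ^ (m + 2))) by (rewrite Rplus_0_r, pow1; reflexivity).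
    apply lim_pow. apply is_lim_seq_plus'; [apply is_lim_seq_const|exact Hy]. }
  replace (Finite (exp (- INR m))) with (Finite (exp (- INR m) / 1)) by (f_equal; field).
  apply is_lim_seq_ext_loc with (u := fun n => exp (INR (n + 1) * ln (1 + y n)) / (1 + y n) ^ (m + 2)).
  - exists (m + 1)%nat. intros n Hn.
    assert (Hpos : 0 < 1 + y n).
    { unfold y. assert (INR m < INR (n + 1)) by (apply lt_INR; lia).
      assert (0 < INR (n + 1)) by (apply lt_0_INR; lia).
      apply Rmult_lt_reg_r with (INR (n + 1)); auto. field_simplify; lra. }
    rewrite <- ln_pow by auto. rewrite exp_ln by (apply pow_lt; auto).
    replace (n + 1)%nat with ((n - m - 1) + (m + 2))%nat at 1 by lia.
    rewrite pow_add. field_simplify.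
    + unfold y. f_equal. field. apply not_0_INR; lia.
    + apply pow_nonzero. lra.
  - apply is_lim_seq_div'; auto; lra.
Qed.

From Coquelicot Require Import Coquelicot.
Open Scope R_scope.

Lemma fact_eq n : ssrnat.factorial n = fact n.
Proof. induction n. reflexivity. rewrite ssrnat.factS. simpl. rewrite IHn. unfold ssrnat.muln, ssrnat.muln_rec. reflexivity. Qed.

Lemma Fr1 k : Fr 1 k = INR (k + 1) ^ (k - 1).
Proof. unfold Fr. destruct k; [reflexivity|]. change ((S k =? 0)%nat) with false. cbv iota. replace (1 + S k)%nat with (S k + 1)%nat by lia. change (INR 1) with 1. ring. Qed.

Definition T (n m : nat) : R := INR (binomial.binomial (n - 1) (m - 1)) * Fr 1 (n - m) * Fr 1 (m - 1).

Lemma bin_ff n m : (1 <= n)%nat -> (1 <= m)%nat ->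
  INR n * INR (binomial.binomial (n - 1) (m - 1)) * INR (fact (m - 1)) = INR (binomial.falling_factorial n m).
Proof.
  intros Hn Hm. assert (E: binomial.falling_factorial n m = binomial.falling_factorial n (S (m-1))) by (f_equal; lia). rewrite E, binomial.ffactnS.
  replace (Init.Nat.pred n) with (n - 1)%nat by lia. rewrite <- binomial.bin_ffact, fact_eq.
  unfold ssrnat.muln, ssrnat.muln_rec. rewrite !mult_INR. ring.
Qed.

Lemma term_lim m : (1 <= m)%nat -> is_lim_seq (fun n => INR n * T n m / Fr 1 n) (borel_pmf m).
Proof.
  intros Hm.
  set (Cst := INR m ^ (m - 2) / INR (fact (m - 1))).
  apply is_lim_seq_ext_loc with
    (u := fun n => (INR (binomial.falling_factorial (n - 0) m) / INR (n + 1) ^ m)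
                   * (1 - INR m / INR (n + 1)) ^ (n - m - 1) * Cst).
  - exists (m + 1)%nat. intros n Hn. unfold T. rewrite !Fr1. rewrite Nat.sub_0_r.
    rewrite <- bin_ff by lia.
    replace (m - 1 + 1)%nat with m by lia. replace (m - 1 - 1)%nat with (m - 2)%nat by lia.
    replace (n - m - 1)%nat with (n - m - 1)%nat by reflexivity.
    replace (n - m + 1)%nat with ((n + 1) - m)%nat by lia.
    rewrite (minus_INR (n + 1) m) by lia.
    replace (n - 1)%nat with (m + (n - m - 1))%nat by lia. rewrite pow_add.
    unfold Cst.
    assert (Hp : INR (n + 1) <> 0) by (apply not_0_INR; lia).
    replace (INR (n + 1) - INR m) with (INR (n + 1) * (1 - INR m / INR (n + 1))) by (field; auto).
    rewrite Rpow_mult_distr.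
    replace (n - m - 1 + 1 - 1)%nat with (n - m - 1)%nat by lia.
    field. repeat split; try apply pow_nonzero; auto. apply INR_fact_neq_0.
  - replace (borel_pmf m) with (1 * exp (- INR m) * Cst).
    + apply is_lim_seq_mult'; [apply is_lim_seq_mult'|apply is_lim_seq_const].
      * apply lim_ffact.
      * apply lim_exp_part; auto.
    + unfold borel_pmf, Cst. destruct m as [|m']; [lia|].
      replace (S m' - 1)%nat with m' by lia. rewrite fact_simpl, mult_INR.
      destruct m' as [|m''].
      * simpl. field.
      * replace (S (S m'') - 2)%nat with m'' by lia. replace (S (S m'') - 1)%nat with (S m'') by lia.
        rewrite <- tech_pow_Rmult. field. split; [apply INR_fact_neq_0|]. apply not_0_INR; lia.
Qed.

From Coquelicot Require Import Coquelicot.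
Open Scope R_scope.

Fixpoint K (n j : nat) : R :=
  match j with
  | O => Fr 1 (n - 1)
  | S j' => K n j' + INR (binomial.binomial (n - 1) (n - j' - 2)) * Fr 1 (n - j' - 2) * Fr 1 (j' + 1)
  end.

Lemma cnt_Cb_K j : forall n, (j + 1 <= n)%nat ->
  INR (cnt (Cb n (n - j)) (seqs (seq 1 n) (n - 1))) = K n j.
Proof.
  induction j; intros n Hn.
  - rewrite Nat.sub_0_r, Cb_top by lia. simpl. apply G_formula; lia.
  - rewrite (Cb_step n (n - S j)) by lia.
    replace (S (n - S j)) with (n - j)%nat by lia.
    rewrite plus_INR, IHj by lia. simpl K. f_equal.
    rewrite Eb_count by lia. rewrite !mult_INR, !G_formula by lia.
    replace (n - S j - 1)%nat with (n - j - 2)%nat by lia.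
    replace (n - (n - S j))%nat with (j + 1)%nat by lia. ring.
Qed.

Lemma Fr1_pos n : 0 < Fr 1 n.
Proof. rewrite Fr1. apply pow_lt. apply lt_0_INR. lia. Qed.

Lemma prob_formula n j : (j + 1 <= n)%nat -> prob_first n (n - j) = K n j / Fr 1 n.
Proof.
  intros H. unfold prob_first. rewrite numer_eq by lia. rewrite PF_length.
  rewrite cnt_Cb_K by lia. rewrite G_formula by lia. reflexivity.
Qed.

Lemma fold_plus_acc l a : fold_right Rplus a l = fold_right Rplus 0 l + a.
Proof. induction l; simpl; [ring|]. rewrite IHl. ring. Qed.

Lemma cdf_S k : borel_cdf (S k) = borel_cdf k + borel_pmf (S k).
Proof.
  unfold borel_cdf. rewrite seq_S, map_app, fold_right_app. simpl.
  rewrite fold_plus_acc. replace (1 + k)%nat with (S k) by lia. ring.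
Qed.

Lemma pmf_pos m : (1 <= m)%nat -> 0 < borel_pmf m.
Proof.
  intros Hm. unfold borel_pmf. apply Rdiv_lt_0_compat.
  - apply Rmult_lt_0_compat; [apply exp_pos|]. apply pow_lt. apply lt_0_INR. lia.
  - apply lt_0_INR. apply lt_O_fact.
Qed.

Lemma cdf_pos k : 0 < borel_cdf (S k).
Proof.
  induction k.
  - rewrite cdf_S. unfold borel_cdf at 1. simpl. pose proof (pmf_pos 1 ltac:(lia)). lra.
  - rewrite cdf_S. pose proof (pmf_pos (S (S k)) ltac:(lia)). lra.
Qed.

Lemma lim_K j : is_lim_seq (fun n => INR n * K n j / Fr 1 n) (borel_cdf (j + 1)).
Proof.
  induction j.
  - replace (borel_cdf (0 + 1)) with (borel_pmf 1) by (unfold borel_cdf; simpl; ring).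
    apply is_lim_seq_ext_loc with (u := fun n => INR n * T n 1 / Fr 1 n); [|apply term_lim; lia].
    exists 1%nat. intros n Hn. unfold T. simpl K. rewrite binomial.bin0.
    replace (1 - 1)%nat with 0%nat by lia. change (INR 1) with 1. replace (Fr 1 0) with 1 by reflexivity. rewrite Rmult_1_l, Rmult_1_r. reflexivity.
  - replace (borel_cdf (S j + 1)) with (borel_cdf (j + 1) + borel_pmf (j + 2)).
    2:{ replace (S j + 1)%nat with (S (j + 1)) by lia. rewrite cdf_S. replace (S (j + 1)) with (j + 2)%nat by lia. reflexivity. }
    apply is_lim_seq_ext_loc with
      (u := fun n => INR n * K n j / Fr 1 n + INR n * T n (j + 2) / Fr 1 n).
    + exists (j + 2)%nat. intros n Hn. simpl K. unfold T.
      replace (j + 2 - 1)%nat with (j + 1)%nat by lia.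
      rewrite <- (@binomial.bin_sub (n - 1)%nat (j + 1)%nat).
      2:{ apply (ssrbool.introT ssrnat.leP). lia. }
      unfold ssrnat.subn, ssrnat.subn_rec.
      replace (n - 1 - (j + 1))%nat with (n - j - 2)%nat by lia.
      replace (n - (j + 2))%nat with (n - j - 2)%nat by lia.
      replace (j + 2 - 1)%nat with (j + 1)%nat by lia.
      unfold Rdiv. ring.
    + apply is_lim_seq_plus'; [exact IHj|]. apply term_lim. lia.
Qed.

Lemma main_j j : is_lim_seq (fun n => prob_first n (n - j) / (borel_cdf (j + 1) / INR n)) 1.
Proof.
  pose proof (cdf_pos j) as Hc. replace (S j) with (j + 1)%nat in Hc by lia.
  apply is_lim_seq_ext_loc with (u := fun n => (INR n * K n j / Fr 1 n) / borel_cdf (j + 1)).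
  - exists (j + 1)%nat. intros n Hn. rewrite prob_formula by lia.
    pose proof (Fr1_pos n). assert (INR n <> 0) by (apply not_0_INR; lia).
    field. repeat split; lra.
  - replace (Finite 1) with (Finite (borel_cdf (j + 1) / borel_cdf (j + 1))) by (f_equal; field; lra).
    apply is_lim_seq_div'; [apply lim_K|apply is_lim_seq_const|lra].
Qed.

Theorem corollary2 :
  (forall j : nat,
     Un_cv (fun n : nat => prob_first n (n - j) / (borel_cdf (j + 1) / INR n)) 1) /\
  Un_cv (fun n : nat => prob_first n n / (1 / (exp 1 * INR n))) 1.
Proof.
  split.
  - intros j. apply is_lim_seq_Reals. apply main_j.
  - apply is_lim_seq_Reals. apply is_lim_seq_ext_loc with
      (u := fun n => prob_first n (n - 0) / (borel_cdf (0 + 1) / INR n)); [|apply main_j].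
    exists 1%nat. intros n Hn. rewrite Nat.sub_0_r. f_equal.
    unfold borel_cdf, borel_pmf. simpl. rewrite exp_Ropp.
    assert (INR n <> 0) by (apply not_0_INR; lia). pose proof (exp_pos 1).
    field. split; lra.
Qed.
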